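(* Let $N\ge 2$ and let $p$ be odd with $3\le p\le 2N-1$. Let $\Lambda=\Lambda^\bullet(\mathbb{C}^{N\times N})$ be the exterior algebra on the $N^2$ odd generators $\Psi_{ij}$, $V_R=\Lambda^R$, and $q:=\mathrm{Tr}(\Psi^p)=\sum_{i_1,\dots,i_p=1}^N\Psi_{i_1i_2}\Psi_{i_2i_3}\cdots\Psi_{i_pi_1}\in\Lambda^p$. Let $Q_R:V_R\to V_{R+p}$, $Q_R(a)=q\wedge a$, and let $\langle a,b\rangle$ denote the coefficient of the top-degree component $[a\wedge b]_{\Lambda^{N^2}}$ (with respect to a fixed generator of $\Lambda^{N^2}$). Then for all $a\in V_R$ and $b\in V_{N^2-p-R}$, \[ \langle Q_Ra,\,b\rangle=(-1)^{pR}\langle a,\,Q_{N^2-p-R}\,b\rangle. \] Consequently $r_R=r_{N^2-p-R}$ for all $R$, where $r_R:=\operatorname{rank}Q_R$, and the rank polynomial $\mathcal R_{p,N}(x)=\sum_R r_Rx^R$ is palindromic of degree $N^2-p$.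
   Context: Here $r_R:=0$ when $R<0$ or $R>N^2-p$. The product $\Psi_{i_1i_2}\cdots\Psi_{i_pi_1}$ is the wedge product in $\Lambda$. *)

(* Defs.v *)
(* Exterior algebra Λ(F^T) on a finite set T of odd generators,
   over a field F, realised concretely as coefficient functions on the monomial
   basis e_S (S : {set T}), with the generators ordered by enum_rank. *)
From HB Require Import structures.
From mathcomp Require Import all_boot all_order all_algebra.
From mathcomp Require Import complex.
Set Implicit Arguments. Unset Strict Implicit. Unset Printing Implicit Defensive.
Import Order.TTheory GRing.Theory Num.Theory.
Local Open Scope ring_scope.

Section Exterior.
Variables (F : fieldType) (T : finType).

Definition ext := {ffun {set T} -> F^o}.

(* sign of e_S ∧ e_S' = ± e_{S ∪ S'} (S, S' disjoint): (-1)^(number of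
   inversions, i.e. pairs s ∈ S, s' ∈ S' with s' before s in the order) *)
Definition wsign (X Y : {set T}) : F :=
  (-1) ^+ #|[set x : T * T | (x.1 \in X) && (x.2 \in Y) &&
                              (enum_rank x.2 < enum_rank x.1)%N]|.

Definition wedge (a b : ext) : ext :=
  [ffun U : {set T} => \sum_(X : {set T}) \sum_(Y : {set T} |
       [disjoint X & Y] && (X :|: Y == U)) wsign X Y * a X * b Y].

Definition emono (X : {set T}) : ext := [ffun U => (U == X)%:R].
Definition eone : ext := emono set0.
Definition egen (t : T) : ext := emono [set t].

Definition Lam (R : nat) : {vspace ext} :=
  <<[seq emono X | X <- enum [set X : {set T} | #|X| == R]]>>%VS.

Definition topPair (a b : ext) : F := wedge a b setT.

Definition Qmap (q : ext) : 'End(ext) := linfun (wedge q).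
Definition rankQ (q : ext) (R : nat) : nat := \dim (Qmap q @: Lam R)%VS.
End Exterior.

Definition Psi (F : fieldType) (N : nat) (i j : 'I_N) : ext F ('I_N * 'I_N)%type :=
  egen F (i, j).

(* q = Tr(Ψ^p) = Σ_{i_1..i_p} Ψ_{i1 i2} ∧ Ψ_{i2 i3} ∧ ... ∧ Ψ_{ip i1}
   (index k ↦ i_{k+1}, with cyclic successor ordS) *)
Definition trPsi (F : fieldType) (N p : nat) : ext F ('I_N * 'I_N)%type :=
  \sum_(i : {ffun 'I_p -> 'I_N})
     \big[@wedge F _/eone F _]_(k < p) Psi F (i k) (i (ordS k)).

(* rank polynomial  Σ_R r_R x^R  (r_R = 0 for R > N^2 - p automatically,
   since Λ^{R+p} = 0 there; sum runs over all degrees 0..N^2) *)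
Definition rankPoly (F : fieldType) (N p : nat) : {poly int} :=
  \sum_(R < (N ^ 2).+1) (rankQ (trPsi F N p) R)%:Z *: 'X^R.

(* Main.v *)
Require Import Defs.
From HB Require Import structures.
From mathcomp Require Import all_boot all_order all_algebra.
From mathcomp Require Import reals complex.
From mathcomp Require Import zify ring.
Import Order.TTheory GRing.Theory Num.Theory.
Import VectorInternalTheory.

Set Implicit Arguments. Unset Strict Implicit. Unset Printing Implicit Defensive.

Lemma modshift t0 p k : t0 < p -> (t0.+1 + (k + (p - t0.+1)) %% p) %% p = k %% p.
Proof.
move=> h; rewrite modnDmr (_ : t0.+1 + (k + (p - t0.+1)) = k + p) ?modnDr //; lia.
Qed.

Lemma modS x y p : x %% p = y %% p -> x.+1 %% p = y.+1 %% p.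
Proof. by move=> h; rewrite -(addn1 x) -(addn1 y) -modnDml h modnDml. Qed.

Lemma comb K p (g : nat -> nat) : p = K.*2.+1 ->
  (forall x y, x %% p = y %% p -> g x = g y) ->
  (forall k, exists2 k', k' < p & g k = k'./2 /\ g k.+1 = (k'.+1 %% p)./2) ->
  (forall k', k' < p -> exists k, g k = k'./2 /\ g k.+1 = (k'.+1 %% p)./2) ->
  (forall k1 k2, g k1 = g k2 -> g k1.+1 = g k2.+1 -> k1 %% p = k2 %% p) ->
  exists r, forall k, g k = ((k + r) %% p)./2.
Proof.
move=> hp Hper H1 H2 H3.
have p0 : 0 < p by rewrite hp.
have hK2 : K.*2 < p by rewrite hp.
have [t0' [gt0' gt1']] := H2 K.*2 hK2.
set t0 := t0' %% p.
have t0p : t0 < p by rewrite ltn_pmod.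
have gt0 : g t0 = K by rewrite -(Hper t0') ?modn_mod // gt0' doubleK.
have gt1 : g t0.+1 = 0.
  rewrite -(Hper t0'.+1) ?gt1' -?hp ?modnn //.
  by apply: modS; rewrite modn_mod.
pose j s := g (t0.+1 + s).
have Hs : forall s, s < K.*2 -> j s < K /\ (j s.+1 = j s \/ j s.+1 = (j s).+1).
  move=> s hs; have [k' hk' [e1 e2]] := H1 (t0.+1 + s).
  rewrite /j addnS.
  case: (ltnP k' K.*2) => hk.
    rewrite modn_small in e2; last by rewrite hp ltnS.
    rewrite e1 e2 -!divn2; lia.
  have ek : k' = K.*2 by move: hk'; rewrite hp ltnS => hk2; apply/eqP; rewrite eqn_leq hk2 hk.
  rewrite ek doubleK in e1; rewrite ek -hp modnn in e2.
  have := H3 (t0.+1 + s) t0; rewrite e1 gt0 e2 gt1 => /(_ erefl erefl).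
  rewrite addSn -addnS -[X in _ = X %% p]addn0 => /eqP; rewrite eqn_modDl.
  by rewrite mod0n modn_small ?hp //; lia.
have Hm : forall s s', s <= s' <= K.*2 -> j s <= j s'.
  move=> s s'; elim: s' => [|s' IH] /andP[h1 h2].
    by move: h1; rewrite leqn0 => /eqP ->.
  case: (ltngtP s s'.+1) h1 => // [hl _|-> _//].
  have [_ st] := Hs s' h2.
  apply: leq_trans (IH _) _; first by rewrite -ltnS hl ltnW.
  by case: st => ->.
have Hc : forall s, s <= K.*2 -> forall s0, s0 <= s -> j s0 = s0./2.
  elim => [|s IH] hs s0.
    by rewrite leqn0 => /eqP ->; rewrite /j addn0 gt1.
  rewrite leq_eqVlt ltnS => /orP[/eqP ->|]; last by apply: IH; apply: ltnW.
  have hs' : s < K.*2 by [].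
  have [jK jst] := Hs s hs'.
  have jIH := IH (ltnW hs') s (leqnn s).
  case: (boolP (odd s)) => os.
    have jm1 := IH (ltnW hs') s.-1 (leq_pred s).
    have os2 : s %% 2 = 1 by rewrite modn2 os.
    case: jst => jeq; last by rewrite jeq jIH -!divn2; lia.
    have sp : 0 < s by move: os; case: (s).
    have e : (t0.+1 + s.-1).+1 = t0.+1 + s by rewrite -addnS prednK.
    have E1 : g (t0.+1 + s.-1) = g (t0.+1 + s).
      by change (j s.-1 = j s); rewrite jm1 jIH -!divn2; lia.
    have E2 : g (t0.+1 + s.-1).+1 = g (t0.+1 + s).+1.
      by rewrite e -addnS; change (j s = j s.+1); rewrite jeq.
    have := H3 _ _ E1 E2; rewrite -e -(addn1 (t0.+1 + s.-1)).
    rewrite -[X in X %% p = _]addn0 => /eqP; rewrite eqn_modDl mod0n modn_small //.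
    by rewrite hp; lia.
  have os2 : s %% 2 = 0 by rewrite modn2 (negbTE os).
  case: jst => jeq; first by rewrite jeq jIH -!divn2; lia.
  exfalso.
  have hsK : s./2 < K by rewrite -jIH.
  have ha : (s./2).*2 < p by rewrite hp ltnS leq_double ltnW.
  have [k [ek ek1]] := H2 _ ha.
  rewrite doubleK in ek.
  have ek1' : g k.+1 = s./2.
    rewrite ek1 modn_small; last by rewrite hp ltnS ltn_double.
    by rewrite -!divn2 -!mul2n; lia.
  set s' := (k + (p - t0.+1)) %% p.
  have hs'p : s' < p by rewrite ltn_pmod.
  have js' : j s' = s./2 by rewrite /j (Hper _ k) ?ek //; exact: (modshift _ t0p).
  have js'1 : j s'.+1 = s./2.
    rewrite /j addnS (Hper _ k.+1) ?ek1' //; apply: modS; exact: (modshift _ t0p).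
  case: (leqP s' s) => hss.
    have := IH (ltnW hs') s' hss; rewrite js' => e1.
    have es : s' = s by rewrite -!divn2 in e1; lia.
    by move: js'1; rewrite es jeq jIH; lia.
  have := Hm s.+1 s'; rewrite hss /= (_ : s' <= K.*2); last by rewrite -ltnS -hp.
  by rewrite js' jeq jIH => /(_ isT); lia.
exists (p - t0.+1) => k.
rewrite -[LHS](Hper (t0.+1 + (k + (p - t0.+1)) %% p)) ?modshift //.
apply: (Hc K.*2 (leqnn _)); rewrite -ltnS -hp ltn_pmod //.
Qed.


Local Open Scope ring_scope.

Section Gen.
Variables (F : fieldType) (T : finType).
Local Notation ext := (ext F T).
Local Notation wedge := (@wedge F T).
Local Notation emono := (@emono F T).
Local Notation wsign := (@wsign F T).
Implicit Types X Y Z A B C U : {set T}.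

Definition inv X Y : nat :=
  #|[set x : T * T | (x.1 \in X) && (x.2 \in Y) &&
                              (enum_rank x.2 < enum_rank x.1)%N]|.

Lemma wsignE X Y : wsign X Y = (-1) ^+ inv X Y. Proof. by []. Qed.

Lemma card_disjU (S1 S2 : {set T * T}) :
  S1 :&: S2 = set0 -> #|S1 :|: S2| = (#|S1| + #|S2|)%N.
Proof. by move=> h; rewrite -cardsUI h cards0 addn0. Qed.

Lemma inv_Ul X Y Z : [disjoint X & Y] -> inv (X :|: Y) Z = (inv X Z + inv Y Z)%N.
Proof.
move=> dXY; rewrite /inv -card_disjU; last first.
  apply/setP => -[a b]; rewrite !inE /=.
  by case: (boolP (a \in X)) => aX //=; rewrite (disjointFr dXY aX) /= andbF.
by apply: eq_card => -[a b]; rewrite !inE /= -!andbA -andb_orl.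
Qed.

Lemma inv_Ur X Y Z : [disjoint Y & Z] -> inv X (Y :|: Z) = (inv X Y + inv X Z)%N.
Proof.
move=> dYZ; rewrite /inv -card_disjU; last first.
  apply/setP => -[a b]; rewrite !inE /=.
  case: (boolP (b \in Y)) => bY; first by rewrite (disjointFr dYZ bY) /= !andbF.
  by rewrite andbF.
by apply: eq_card => -[a b]; rewrite !inE /= andb_orr andb_orl.
Qed.

Lemma inv_sym X Y : [disjoint X & Y] -> (inv X Y + inv Y X)%N = (#|X| * #|Y|)%N.
Proof.
move=> dXY; rewrite /inv -cardsX.
pose sw (x : T * T) := (x.2, x.1).
have swI : injective sw by move=> [a b] [c d] /= [-> ->].
rewrite -[X in (_ + X)%N](card_preimset _ swI) -card_disjU; last first.
  apply/setP => -[a b]; rewrite !inE /=.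
  case: (a \in X) (b \in Y) (b \in X) (a \in Y) => [] [] [] [] //=.
  1-4: by case: ltngtP.
apply: eq_card => -[a b]; rewrite !inE /=.
case: (boolP (a \in X)) => aX /=; last by rewrite andbF.
case: (boolP (b \in Y)) => bY //=; rewrite ?andbT.
case: ltngtP => // /ord_inj/enum_rank_inj ab.
by rewrite ab (disjointFr dXY aX) in bY.
Qed.

Lemma sgnP (m n : nat) : odd m = odd n -> (-1) ^+ m = (-1) ^+ n :> F.
Proof. by move=> h; rewrite -signr_odd h signr_odd. Qed.

Lemma wsign_sq X Y : wsign X Y * wsign X Y = 1.
Proof. by rewrite wsignE -expr2 sqrr_sign. Qed.

Lemma emonoE A U : emono A U = (U == A)%:R. Proof. by rewrite ffunE. Qed.

Lemma setUDsub X U : X \subset U -> X :|: U :\: X = U.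
Proof.
move=> XU; apply/setP => x; rewrite !inE.
by case: (boolP (x \in X)) => xX //=; rewrite (subsetP XU).
Qed.

Lemma setDUsub X U : X \subset U -> U :\: X :|: X = U.
Proof. by move=> XU; rewrite setUC setUDsub. Qed.

Lemma disj_D X U : [disjoint X & U :\: X].
Proof. by rewrite -setI_eq0; apply/eqP/setP => x; rewrite !inE; case: (x \in X). Qed.

Lemma part_l X Y U : X \subset U ->
  ([disjoint X & Y] && (X :|: Y == U)) = (Y == U :\: X).
Proof.
move=> XU; apply/andP/eqP => [[d /eqP <-]|->]; last first.
  by rewrite disj_D setUDsub.
by rewrite setDUl setDv set0U; apply/esym/setDidPl; rewrite disjoint_sym.
Qed.

Lemma part_r X Y U : Y \subset U ->
  ([disjoint X & Y] && (X :|: Y == U)) = (X == U :\: Y).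
Proof. by move=> YU; rewrite disjoint_sym setUC part_l. Qed.

Lemma W_l a b U : wedge a b U =
  \sum_(X : {set T} | X \subset U) wsign X (U :\: X) * a X * b (U :\: X).
Proof.
rewrite ffunE [RHS]big_mkcond; apply: eq_bigr => X _.
case: ifP => XU.
  by rewrite (big_pred1 (U :\: X)) // => Y; rewrite /= part_l.
rewrite big_pred0 // => Y; apply/negbTE/negP => /andP[_ /eqP eU].
by move: XU; rewrite -eU subsetUl.
Qed.

Lemma W_r a b U : wedge a b U =
  \sum_(Y : {set T} | Y \subset U) wsign (U :\: Y) Y * a (U :\: Y) * b Y.
Proof.
rewrite ffunE (eq_bigr (fun X : {set T} => \sum_(Y : {set T}) if [disjoint X & Y] && (X :|: Y == U)
   then wsign X Y * a X * b Y else 0)); last by move=> X _; rewrite big_mkcond.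
rewrite exchange_big [RHS]big_mkcond; apply: eq_bigr => Y _.
rewrite -big_mkcond /=; case: ifP => YU.
  by rewrite (big_pred1 (U :\: Y)) // => X; rewrite /= part_r.
rewrite big_pred0 // => X; apply/negbTE/negP => /andP[_ /eqP eU].
by move: YU; rewrite -eU subsetUr.
Qed.

Lemma wedge_emono_l A c U : wedge (emono A) c U =
  if A \subset U then wsign A (U :\: A) * c (U :\: A) else 0.
Proof.
rewrite W_l; case: ifP => AU.
  rewrite (bigD1 A) //= big1 ?addr0 => [|X /andP[_ nXA]].
    by rewrite emonoE eqxx mulr1.
  by rewrite emonoE (negbTE nXA) mulr0 mul0r.
rewrite big1 // => X XU; rewrite emonoE; case: eqP => [eXA|]; last by rewrite mulr0 mul0r.
by move: AU; rewrite -eXA XU.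
Qed.

Lemma wedge_emono_r c A U : wedge c (emono A) U =
  if A \subset U then wsign (U :\: A) A * c (U :\: A) else 0.
Proof.
rewrite W_r; case: ifP => AU.
  rewrite (bigD1 A) //= big1 ?addr0 => [|X /andP[_ nXA]].
    by rewrite emonoE eqxx mulr1.
  by rewrite emonoE (negbTE nXA) mulr0.
rewrite big1 // => X XU; rewrite emonoE; case: eqP => [eXA|]; last by rewrite mulr0.
by move: AU; rewrite -eXA XU.
Qed.

Lemma inv0l Y : inv set0 Y = 0%N.
Proof. by apply/eqP; rewrite cards_eq0; apply/eqP/setP => x; rewrite !inE. Qed.
Lemma inv0r Y : inv Y set0 = 0%N.
Proof. by apply/eqP; rewrite cards_eq0; apply/eqP/setP => x; rewrite !inE andbF. Qed.

Lemma wedge_1l c : wedge (eone F T) c = c.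
Proof.
by apply/ffunP => U; rewrite /eone wedge_emono_l sub0set setD0 wsignE inv0l mul1r.
Qed.

Lemma wedge_1r c : wedge c (eone F T) = c.
Proof.
by apply/ffunP => U; rewrite /eone wedge_emono_r sub0set setD0 wsignE inv0r mul1r.
Qed.

Definition homog (c : ext) (d : nat) := forall U, c U != 0 -> #|U| = d.

Lemma ffunZE (k : F) (c : ext) U : (k *: c) U = k * c U.
Proof. by rewrite ffunE. Qed.

Lemma wedge_comm_emono A c d : homog c d ->
  wedge (emono A) c = (-1) ^+ (#|A| * d) *: wedge c (emono A).
Proof.
move=> hc; apply/ffunP => U; rewrite ffunZE wedge_emono_l wedge_emono_r.
case: ifP => AU; last by rewrite mulr0.
have [->|nz] := eqVneq (c (U :\: A)) 0; first by rewrite !mulr0.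
rewrite mulrA; congr (_ * _); rewrite !wsignE -exprD; apply: sgnP.
by rewrite -(hc _ nz) -(inv_sym (disj_D A U)) -addnA addnn oddD odd_double addbF.
Qed.

Lemma wedge_assoc_emono A b c :
  wedge (emono A) (wedge b c) = wedge (wedge (emono A) b) c.
Proof.
apply/ffunP => U; rewrite wedge_emono_l [RHS]W_r.
under eq_bigr do rewrite wedge_emono_l.
case: ifP => AU; last first.
  rewrite big1 // => Z ZU; rewrite (_ : (A \subset U :\: Z) = false) ?mulr0 ?mul0r //.
  by apply/negbTE/negP => h; move: AU; rewrite (subset_trans h (subsetDl _ _)).
rewrite W_r mulr_sumr [LHS]big_mkcond [RHS]big_mkcond; apply: eq_bigr => Z _ /=.
case: (boolP (Z \subset U :\: A)) => ZUA; last first.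
  case: ifP => ZU //; rewrite (_ : (A \subset U :\: Z) = false) ?mulr0 ?mul0r //.
  apply/negbTE/negP => /subsetDP[_ dAZ]; move: ZUA.
  by rewrite subsetD ZU disjoint_sym dAZ.
have [ZU dZA] := subsetDP ZUA.
rewrite ZU (_ : A \subset U :\: Z); last by rewrite subsetD AU disjoint_sym.
set Y := U :\: A :\: Z.
have eY : U :\: Z :\: A = Y by rewrite /Y !setDDl setUC.
have e1 : U :\: A = Y :|: Z by rewrite /Y setDUsub.
have AUZ : A \subset U :\: Z by rewrite subsetD AU disjoint_sym.
have e2 : U :\: Z = A :|: Y by rewrite -eY setUDsub.
have dYZ : [disjoint Y & Z] by rewrite disjoint_sym /Y disj_D.
have dAY : [disjoint A & Y] by rewrite -eY disj_D.
rewrite eY e1 e2 !wsignE inv_Ur // inv_Ul // !exprD.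
ring.
Qed.


Lemma SL A B : [disjoint A & B] ->
  wsign (~: B) B * wsign (~: (A :|: B)) A =
  (-1) ^+ (#|~: (A :|: B)| * #|A|) * wsign A (~: A) * wsign (~: (A :|: B)) B.
Proof.
move=> dAB; set C := ~: (A :|: B).
have e1 : ~: B = C :|: A.
  apply/setP => x; rewrite !inE; move: (disjointFr dAB (x:=x)).
  by case: (x \in A); case: (x \in B) => //= /(_ isT).
have e2 : ~: A = C :|: B.
  apply/setP => x; rewrite !inE; move: (disjointFr dAB (x:=x)).
  by case: (x \in A); case: (x \in B) => //= /(_ isT).
have dCA : [disjoint C & A] by rewrite disjoints_subset setCS subsetUl.
have dCB : [disjoint C & B] by rewrite disjoints_subset setCS subsetUr.
rewrite {1}e1 {1}e2 !wsignE inv_Ul // inv_Ur // -!exprD; apply: sgnP.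
rewrite -(inv_sym dCA).
have -> : (inv C A + inv A C + (inv A C + inv A B) + inv C B =
   (inv C B + inv A B + inv C A) + 2 * inv A C)%N by ring.
by rewrite [in RHS]oddD oddM /= addbF.
Qed.

Lemma pairing q a b d R : homog q d -> homog a R ->
  topPair (wedge q a) b = (-1) ^+ (d * R) * topPair a (wedge q b).
Proof.
move=> hq ha; rewrite /topPair W_r W_l mulr_sumr.
under eq_bigr do rewrite W_r mulr_sumr mulr_suml.
under [RHS]eq_bigr do rewrite W_r !mulr_sumr.
rewrite (eq_bigl xpredT); last by move=> B; rewrite subsetT.
rewrite [RHS](eq_bigl xpredT); last by move=> B; rewrite subsetT.
under eq_bigr do rewrite big_mkcond.
rewrite exchange_big; apply: eq_bigr => A _.
rewrite [RHS]big_mkcond; apply: eq_bigr => B _ /=.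
rewrite !subsetD !subsetT /= (disjoint_sym B A).
case: ifP => // dAB.
rewrite !setDDl !setTD (setUC B A).
set C := ~: (A :|: B).
case: (eqVneq (q C) 0) => [->|nq]; first by rewrite !(mulr0, mul0r).
case: (eqVneq (a A) 0) => [->|na]; first by rewrite !(mulr0, mul0r).
have := SL dAB; rewrite -/C (hq _ nq) (ha _ na) => hs.
transitivity ((wsign (~: B) B * wsign C A) * (q C * a A * b B)); first by ring.
rewrite hs; ring.
Qed.

Definition gprod (l : seq T) : ext := foldr wedge (eone F T) (map (@egen F T) l).

Lemma gprod_neq0 l U :
  (gprod l U != 0) = (U == [set x in l]) && (#|U| == size l).
Proof.
elim: l U => [|x l IH] U.
  rewrite /gprod /= /eone emonoE set_nil.
  case: (U =P set0) => [->|nU]; first by rewrite cards0 eqxx oner_neq0.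
  by rewrite /= eqxx.
have -> : gprod (x :: l) = wedge (@egen F T x) (gprod l) by [].
rewrite /egen wedge_emono_l sub1set set_cons.
case: (boolP (x \in U)) => xU; last first.
  rewrite eqxx /=; apply/esym/negbTE/negP => /andP[/eqP e _].
  by move: xU; rewrite e setU11.
rewrite mulf_eq0 negb_or wsignE signr_eq0 /= IH.
have hL : (#|[set y in l]| <= size l)%N by rewrite cardsE card_size.
apply/andP/andP => [[/eqP e1 /eqP e2]|[/eqP e1 /eqP e2]].
  by rewrite -e1 setD1K // (cardsD1 x U) xU e2.
have xL : x \notin [set y in l].
  apply/negP=> xL; move: e2; rewrite e1 cardsU1 xL add0n => e.
  by move: hL; rewrite e ltnn.
split; first by rewrite e1 setU1K.
by move: e2; rewrite (cardsD1 x U) xU add1n => -[->].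
Qed.

Lemma gprod_hom l : homog (gprod l) (size l).
Proof. by move=> U; rewrite gprod_neq0 => /andP[_ /eqP]. Qed.

Lemma foldr_gen l c : foldr wedge c (map (@egen F T) l) = wedge (gprod l) c.
Proof.
elim: l => [|x l IH] /=; first by rewrite wedge_1l.
by rewrite IH /egen wedge_assoc_emono.
Qed.

Lemma gprod_rot x l : ~~ odd (size l) -> gprod (rcons l x) = gprod (x :: l).
Proof.
move=> ev; rewrite -cats1 {1}/gprod map_cat foldr_cat /= foldr_gen wedge_1r.
have -> : gprod (x :: l) = wedge (@egen F T x) (gprod l) by [].
rewrite /egen (wedge_comm_emono _ (@gprod_hom l)) cards1 mul1n -signr_odd.
by rewrite (negbTE ev) expr0 scale1r.
Qed.

Lemma wedge_linear c : linear (wedge c).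
Proof.
move=> k x y; apply/ffunP => U; rewrite [RHS]ffunE ffunZE !W_r.
under eq_bigr do rewrite ffunE ffunZE.
rewrite mulr_sumr -big_split; apply: eq_bigr => Y _ /=; ring.
Qed.

HB.instance Definition _ (c : ext) :=
  GRing.isLinear.Build F ext ext *:%R (wedge c) (wedge_linear c).

Lemma QmapE c x : Qmap c x = wedge c x.
Proof. by rewrite lfunE. Qed.


Local Notation m := #|{set T}|.

Definition crow (a : ext) : 'rV[F]_m := \row_j a (enum_val j).

Lemma ext_expand (a : ext) :
  a = \sum_(j < m) a (enum_val j) *: emono (enum_val j).
Proof.
apply/ffunP => U; rewrite sum_ffunE (bigD1 (enum_rank U)) //= big1 => [|j nj].
  by rewrite ffunZE emonoE enum_rankK eqxx mulr1 addr0.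
rewrite ffunZE emonoE (_ : (U == enum_val j) = false) ?mulr0 //.
by apply/negbTE; apply: contra nj => /eqP ->; rewrite enum_valK.
Qed.

Definition Pmx := \matrix_(j < m) v2r (emono (enum_val j)).

Lemma mulPmx (u : 'rV[F]_m) :
  u *m Pmx = v2r (\sum_(j < m) u 0 j *: emono (enum_val j)).
Proof.
rewrite mulmx_sum_row linear_sum; apply: eq_bigr => j _.
by rewrite linearZ rowK.
Qed.

Lemma v2r_crow (a : ext) : v2r a = crow a *m Pmx.
Proof.
rewrite mulPmx {1}(ext_expand a); congr (v2r _); apply: eq_bigr => j _.
by rewrite mxE.
Qed.

Lemma Pmx_free : row_free Pmx.
Proof.
rewrite -kermx_eq0; apply/eqP/row_matrixP => i; rewrite row0.
set u := row i (kermx Pmx).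
have hu : u *m Pmx = 0 by rewrite -row_mul mulmx_ker row0.
rewrite mulPmx in hu.
have h0 : \sum_(j < m) u 0 j *: emono (enum_val j) = 0.
  by rewrite -[LHS]v2rK hu linear0.
apply/rowP => k; rewrite mxE.
have := congr1 (fun f : ext => f (enum_val k)) h0.
rewrite sum_ffunE ffunE (bigD1 k) //= big1 => [|j nj].
  by rewrite ffunZE emonoE eqxx mulr1 addr0 /u mxE => ->; rewrite mxE.
rewrite ffunZE emonoE (_ : (enum_val k == enum_val j) = false) ?mulr0 //.
by apply/negbTE; apply: contra nj => /eqP/enum_val_inj ->.
Qed.

Lemma dim_span_crow (X : seq ext) n (H : size X = n) :
  \dim <<X>> = \rank (\matrix_(i < n) crow X`_i).
Proof.
subst n; rewrite unlock /dimv genmxE.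
have -> : b2mx (in_tuple X) = (\matrix_(i < size X) crow X`_i) *m Pmx.
  apply/row_matrixP => i; rewrite row_mul !rowK v2r_crow.
  by rewrite (tnth_nth 0).
by rewrite mxrankMfree // Pmx_free.
Qed.


Definition Mq (q : ext) (R : nat) : 'M[F]_m := \matrix_(i < m, j < m)
  (if #|enum_val i| == R then wedge q (emono (enum_val i)) (enum_val j) else 0).

Lemma rankQ_mx q R : rankQ q R = \rank (Mq q R).
Proof.
rewrite /rankQ /Lam limg_span.
pose g (X : {set T}) : ext := if #|X| == R then wedge q (emono X) else 0.
have -> : <<map (Qmap q) [seq emono X | X <- enum [set X : {set T} | #|X| == R]]>>%VS
   = <<[seq g X | X <- enum {set T}]>>%VS.
  apply/eqP; rewrite eqEsubv; apply/andP; split; apply/span_subvP => x.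
    move=> /mapP[y /mapP[X XR ->] ->]; rewrite QmapE; apply: memv_span.
    apply/mapP; exists X; first by rewrite mem_enum.
    by move: XR; rewrite mem_enum inE /g => ->.
  move=> /mapP[X _ ->]; rewrite /g; case: ifP => hX; last exact: mem0v.
  apply: memv_span; apply/mapP; exists (emono X); last by rewrite QmapE.
  by apply/mapP; exists X; rewrite // mem_enum inE hX.
rewrite (dim_span_crow (n := m)); last by rewrite size_map cardE.
congr (\rank _); apply/matrixP => i j; rewrite !mxE.
rewrite (nth_map set0); last by rewrite -cardE ltn_ord.
have -> : nth set0 (enum {set T}) i = enum_val i.
  by rewrite /enum_val; apply: set_nth_default; rewrite -cardE ltn_ord.
by rewrite /g; case: ifP => //; rewrite ffunE.
Qed.


Lemma key_rel q d R X Y : homog q d -> (R + d <= #|T|)%N ->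
  (if #|X| == R then wedge q (emono X) Y else 0) =
  ((-1) ^+ (d * #|X|) * wsign X (~: X)) * wsign Y (~: Y) *
  (if #|~: Y| == (#|T| - d - R)%N then wedge q (emono (~: Y)) (~: X) else 0).
Proof.
move=> hq hR; rewrite !wedge_emono_r setCS.
case: (boolP (X \subset Y)) => XY; last by rewrite !if_same mulr0.
have eC : ~: X :\: ~: Y = Y :\: X by apply/setP => x; rewrite !inE negbK andbC.
rewrite eC; set C := Y :\: X.
case: (eqVneq (q C) 0) => [->|nq]; first by rewrite !(mulr0, if_same).
have hC := hq _ nq.
have cC : #|C| = (#|Y| - #|X|)%N by rewrite cardsD (setIidPr XY).
have cXY : (#|X| <= #|Y|)%N by apply: subset_leq_card.
have cY : (#|Y| <= #|T|)%N by apply: max_card.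
have cYc : #|~: Y| = (#|T| - #|Y|)%N by rewrite cardsCs setCK.
have -> : (#|X| == R) = (#|~: Y| == (#|T| - d - R)%N).
  apply/eqP/eqP; lia.
case: ifP => _; last by rewrite mulr0.
have dXB : [disjoint X & ~: Y] by rewrite disjoints_subset setCK.
have hs := SL dXB.
have eC2 : ~: (X :|: ~: Y) = C.
  by apply/setP => x; rewrite !inE negb_or negbK andbC.
rewrite setCK eC2 hC in hs.
transitivity (wsign Y (~: Y) * (wsign Y (~: Y) * wsign C X) * q C).
  by rewrite mulrA wsign_sq mul1r.
rewrite hs; ring.
Qed.

Definition Aone d : 'M[F]_m := \matrix_(i < m, k < m)
  (if k == enum_rank (~: enum_val i)
   then (-1) ^+ (d * #|enum_val i|) * wsign (enum_val i) (~: enum_val i) else 0).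
Definition Atwo : 'M[F]_m := \matrix_(l < m, j < m)
  (if l == enum_rank (~: enum_val j) then wsign (enum_val j) (~: enum_val j) else 0).

Lemma Mq_rel q d R : homog q d -> (R + d <= #|T|)%N ->
  Mq q R = Aone d *m (Mq q (#|T| - d - R))^T *m Atwo.
Proof.
move=> hq hR; apply/matrixP => i j; rewrite !mxE.
rewrite (bigD1 (enum_rank (~: enum_val j))) //= big1 ?addr0; last first.
  by move=> l nl; rewrite [Atwo _ _]mxE (negbTE nl) mulr0.
rewrite [Atwo _ _]mxE eqxx mxE (bigD1 (enum_rank (~: enum_val i))) //= big1 ?addr0; last first.
  by move=> l nl; rewrite [Aone _ _ _]mxE (negbTE nl) mul0r.
rewrite [Aone _ _ _]mxE eqxx !mxE !enum_rankK (key_rel _ _ hq hR).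
rewrite -!mulrA; congr (_ * (_ * _)); exact: mulrC.
Qed.

Lemma rank_sym q d R : homog q d -> (R + d <= #|T|)%N ->
  \rank (Mq q R) = \rank (Mq q (#|T| - d - R)).
Proof.
move=> hq hR.
have le1 : forall R0, (R0 + d <= #|T|)%N ->
    (\rank (Mq q R0) <= \rank (Mq q (#|T| - d - R0)))%N.
  move=> R0 h0; rewrite (Mq_rel hq h0).
  apply: leq_trans (mxrankM_maxl _ _) _; apply: leq_trans (mxrankM_maxr _ _) _.
  by rewrite mxrank_tr.
apply/eqP; rewrite eqn_leq le1 //=.
have h' : (#|T| - d - R + d <= #|T|)%N by lia.
have := le1 _ h'; rewrite (_ : (#|T| - d - (#|T| - d - R))%N = R) //; lia.
Qed.


Lemma gprod_rot1 l : odd (size l) -> gprod (rot 1 l) = gprod l.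
Proof. by case: l => [|x l] //= h; rewrite rot1_cons gprod_rot. Qed.

Lemma Lam_hom a R : a \in Lam F T R -> homog a R.
Proof.
move=> /coord_span -> U; rewrite sum_ffunE => nz; apply/eqP; apply: contraNT nz => hU.
rewrite big1 // => i _; rewrite ffunZE.
have /mapP[X XR ->] : (in_tuple [seq emono X | X <- enum [set X : {set T} | #|X| == R]])`_i
   \in [seq emono X | X <- enum [set X : {set T} | #|X| == R]].
  by apply: mem_nth; rewrite size_map -cardE ltn_ord.
rewrite emonoE; case: eqP => [eUX|]; last by rewrite mulr0.
by move: XR hU; rewrite mem_enum inE eUX => ->.
Qed.

End Gen.

Lemma uniq_map_inj (A B : eqType) (f : A -> B) s x y :
  uniq (map f s) -> x \in s -> y \in s -> f x = f y -> x = y.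
Proof.
elim: s => //= a s IH /andP[nfa u]; rewrite !inE => /orP[/eqP->|xs] /orP[/eqP->|ys] // e.
- by move: nfa; rewrite e map_f.
- by move: nfa; rewrite -e map_f.
- exact: IH.
Qed.

Local Close Scope ring_scope.

Section Conc.
Variables (F : numFieldType) (N K : nat).
Hypothesis KN : (K < N)%N.
Local Notation p := K.*2.+1.
Local Notation T := ('I_N * 'I_N)%type.
Local Notation walk := {ffun 'I_p -> 'I_N}.

Definition tw (i : walk) (k : 'I_p) : T := (i k, i (ordS k)).
Definition Pw (i : walk) : ext F T :=
  \big[@wedge F T/eone F T]_(k < p) Psi F (i k) (i (ordS k)).

Lemma Pw_gprod i : Pw i = gprod F (map (tw i) (enum 'I_p)).
Proof.
rewrite /Pw [index_enum _]unlock -enumT /gprod.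
elim: (enum 'I_p) => [|x s IH] /=; first by rewrite big_nil.
by rewrite big_cons IH.
Qed.

Lemma trPsi_sum : trPsi F N p = (\sum_i Pw i)%R.
Proof. by []. Qed.

Lemma hom_q : homog (trPsi F N p) p.
Proof.
move=> U; rewrite trPsi_sum sum_ffunE => nz; apply/eqP; apply: contraNT nz => hU.
apply/eqP; rewrite big1 // => i _; rewrite Pw_gprod.
case: (eqVneq (gprod F (map (tw i) (enum 'I_p)) U) 0%R) => [->//|nz'].
by move: hU; rewrite (gprod_hom nz') size_map size_enum_ord eqxx.
Qed.

Definition rot1 (i : walk) : walk := [ffun k => i (ordS k)].

Lemma enum_ordS : map (@ordS p) (enum 'I_p) = rot 1 (enum 'I_p).
Proof.
apply: (inj_map val_inj); rewrite map_rot -map_comp.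
have -> : map (val \o @ordS p) (enum 'I_p) = map (fun k => k.+1 %% p) (map val (enum 'I_p)).
  by rewrite -map_comp.
rewrite val_enum_ord.
have e1 : iota 0 p = iota 0 K.*2 ++ [:: K.*2] by rewrite -addn1 iotaD.
rewrite {1}e1 map_cat /= modnn rot1_cons -cats1; congr (_ ++ _).
rewrite (iotaDl 1 0); apply/eq_in_map => k.
by rewrite mem_iota add0n => /andP[_ h]; rewrite modn_small // add1n ltnS.
Qed.

Lemma Pw_rot1 i : Pw (rot1 i) = Pw i.
Proof.
rewrite !Pw_gprod.
have -> : map (tw (rot1 i)) (enum 'I_p) = map (tw i) (map (@ordS p) (enum 'I_p)).
  by rewrite -map_comp; apply: eq_map => k; rewrite /tw /= !ffunE.
by rewrite enum_ordS map_rot gprod_rot1 // size_map size_enum_ord /= odd_double.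
Qed.

Lemma iter_rot1 r i k : (iter r rot1 i) k = i (inord ((k + r) %% p)).
Proof.
elim: r k => [|r IH] k /=; first by rewrite addn0 modn_small ?inord_val.
rewrite ffunE IH; congr (i _); apply: val_inj => /=; rewrite !inordK ?ltn_pmod //=.
by rewrite modnDml addSnnS.
Qed.

Lemma Pw_iter r i : Pw (iter r rot1 i) = Pw i.
Proof. by elim: r => //= r IH; rewrite Pw_rot1. Qed.

Lemma half_lt (k : nat) : (k < p)%N -> (k./2 < N)%N.
Proof. by move=> h; rewrite -divn2; move: h; rewrite -mul2n; lia. Qed.

Definition w : walk := [ffun k : 'I_p => Ordinal (half_lt (ltn_ord k))].

Lemma wE (k : 'I_p) : val (w k) = k./2.
Proof. by rewrite ffunE. Qed.

Lemma modS_small k : (k < p)%N -> k.+1 %% p = if k.+1 == p then 0%N else k.+1.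
Proof.
move=> h; case: eqP => [->|ne]; first by rewrite modnn.
by rewrite modn_small // ltn_neqAle h andbT; apply/eqP.
Qed.

Lemma tw_w_inj : injective (tw w).
Proof.
move=> k1 k2 [/(congr1 val) e1 /(congr1 val) e2]; apply/val_inj.
rewrite !wE /= in e1 e2.
have h1 := ltn_ord k1; have h2 := ltn_ord k2.
rewrite (modS_small h1) (modS_small h2) in e2.
change (nat_of_ord k1 = nat_of_ord k2); move: e1 e2 h1 h2.
move: (nat_of_ord k1) (nat_of_ord k2) => a b; rewrite -!divn2 -!mul2n.
case: eqP => ea; case: eqP => eb /=; lia.
Qed.

Definition Sw : {set T} := [set x in map (tw w) (enum 'I_p)].

Lemma Pw_w_S : Pw w Sw != 0%R.
Proof.
rewrite Pw_gprod gprod_neq0 eqxx /= /Sw cardsE.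
apply/eqP/card_uniqP.
by rewrite map_inj_uniq ?enum_uniq //; apply: tw_w_inj.
Qed.


Lemma ordmod (k : nat) : val (inord (k %% p) : 'I_p) = k %% p.
Proof. by rewrite /= inordK // ltn_pmod. Qed.

Lemma ordS_inord k : ordS (inord (k %% p) : 'I_p) = inord (k.+1 %% p).
Proof.
apply: val_inj => /=; rewrite !inordK ?ltn_pmod //.
by apply: modS; rewrite modn_mod.
Qed.

Lemma inord_val_mod (x : 'I_p) : inord (x %% p) = x.
Proof. by rewrite modn_small // inord_val. Qed.

Lemma main_walk i : Pw i Sw != 0%R -> Pw i = Pw w.
Proof.
rewrite Pw_gprod gprod_neq0 => /andP[/eqP eS /eqP cS].
set Li := map (tw i) (enum 'I_p) in eS cS.
have uL : uniq Li by apply/card_uniqP; rewrite -cardsE -eS.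
have inj : forall x y : 'I_p, tw i x = tw i y -> x = y.
  by move=> x y; apply: (uniq_map_inj uL); rewrite mem_enum.
pose g k := val (i (inord (k %% p))).
have gS : forall k, val (i (ordS (inord (k %% p) : 'I_p))) = g k.+1.
  by move=> k; rewrite ordS_inord.
have [r Hr] : exists r, forall k, g k = ((k + r) %% p)./2.
  apply: (@comb K _ g erefl).
  - by move=> x y e; rewrite /g e.
  - move=> k; have : tw i (inord (k %% p)) \in Sw.
      by rewrite eS inE; apply: map_f; rewrite mem_enum.
    rewrite inE => /mapP[k' _ [e1 e2]]; exists (val k'); first exact: ltn_ord.
    split; first by rewrite /g e1 wE.
    by rewrite -gS e2 wE.
  - move=> k' hk'; have : tw w (Ordinal hk') \in [set x in Li].
      by rewrite -eS inE map_f ?mem_enum.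
    rewrite inE => /mapP[x _ [e1 e2]]; exists (val x).
    split; first by rewrite /g inord_val_mod -e1 wE.
    by rewrite -gS inord_val_mod -e2 wE.
  - move=> k1 k2 e1 e2.
    have E : tw i (inord (k1 %% p)) = tw i (inord (k2 %% p)).
      rewrite /tw; congr (_, _); apply: val_inj; first exact: e1.
      by rewrite !gS.
    by have := congr1 val (inj _ _ E); rewrite !ordmod.
have -> : i = iter r rot1 w.
  apply/ffunP => k; rewrite iter_rot1; apply: val_inj; rewrite wE.
  by have := Hr k; rewrite /g inord_val_mod => ->; rewrite inordK // ltn_pmod.
by rewrite -Pw_gprod Pw_iter.
Qed.

Lemma qS : trPsi F N p Sw != 0%R.
Proof.
rewrite trPsi_sum sum_ffunE.
rewrite (eq_bigr (fun i => if Pw i Sw != 0%R then Pw w Sw else 0%R)); last first.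
  by move=> i _; case: ifP => [h|/negbFE/eqP ->//]; rewrite (main_walk h).
rewrite -big_mkcond sumr_const mulrn_eq0 negb_or Pw_w_S andbT -lt0n.
by apply/card_gt0P; exists w; rewrite unfold_in /= ?Pw_w_S.
Qed.

End Conc.


Unset Implicit Arguments.
Local Open Scope ring_scope.

Theorem mainTheorem2 (Rr : realType) (N p : nat) :
  (2 <= N)%N -> odd p -> (3 <= p)%N -> (p <= 2 * N - 1)%N ->
  let F := (Rr[i])%type in
  let q := trPsi F N p in
  (forall (R : nat), (R <= N ^ 2 - p)%N ->
     forall a b : ext F ('I_N * 'I_N)%type,
       a \in Lam F _ R -> b \in Lam F _ (N ^ 2 - p - R) ->
       topPair (wedge q a) b = (-1) ^+ (p * R) * topPair a (wedge q b))
  /\ (forall R : nat, (R <= N ^ 2 - p)%N -> rankQ q R = rankQ q (N ^ 2 - p - R))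
  /\ size (rankPoly F N p) = (N ^ 2 - p).+1
  /\ (forall R : nat, (R <= N ^ 2 - p)%N ->
        (rankPoly F N p)`_R = (rankPoly F N p)`_(N ^ 2 - p - R)).
Proof.
move=> N2 op p3 pN F q.
have [K hp] : exists K, p = K.*2.+1.
  by exists p./2; rewrite -[p in LHS]odd_double_half op add1n.
subst p.
have KN : (K < N)%N by move: pN; rewrite -mul2n; lia.
have hNN : (2 * N <= N * N)%N by rewrite leq_mul2r N2 orbT.
have cT : #|{: 'I_N * 'I_N}| = (N ^ 2)%N by rewrite card_prod card_ord mulnn.
have pn : (K.*2.+1 <= N ^ 2)%N by rewrite -mulnn; move: pN hNN; rewrite -mul2n; lia.
have hq : homog q K.*2.+1 := @hom_q (Rr[i]) N K.
have part2 : forall R : nat, (R <= N ^ 2 - K.*2.+1)%N ->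
    rankQ q R = rankQ q (N ^ 2 - K.*2.+1 - R).
  move=> R hR; rewrite !rankQ_mx (rank_sym hq) ?cT //; lia.
have coefE : forall j, (rankPoly F N K.*2.+1)`_j =
    if (j <= N ^ 2)%N then (rankQ q j)%:Z else 0.
  move=> j; rewrite /rankPoly coef_sum.
  under eq_bigr do rewrite coefZ coefXn.
  case: ifP => hj.
    rewrite (bigD1 (Ordinal (hj : (j < (N ^ 2).+1)%N))) //= eqxx mulr1.
    rewrite big1 ?addr0 // => k nk; rewrite (_ : (j == k) = false) ?mulr0 //.
    by apply/negbTE; apply: contra nk => /eqP e; apply/eqP/val_inj; rewrite /= e.
  rewrite big1 // => k _; rewrite (_ : (j == k) = false) ?mulr0 //.
  by apply/negbTE/eqP => e; move: hj; rewrite e -ltnS ltn_ord.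
have r0 : forall R, (N ^ 2 - K.*2.+1 < R)%N -> rankQ q R = 0%N.
  move=> R hR; rewrite rankQ_mx; apply/eqP; rewrite mxrank_eq0; apply/eqP/matrixP => i j.
  rewrite !mxE; case: ifP => // /eqP hX; rewrite wedge_emono_r; case: ifP => // sub.
  case: (eqVneq (q (enum_val j :\: enum_val i)) 0) => [->|nz]; first by rewrite mulr0.
  exfalso; have := hq _ nz; rewrite cardsD (setIidPr sub).
  have := max_card (enum_val j); rewrite cT.
  have := subset_leq_card sub; lia.
have rq0 : rankQ q 0 != 0%N.
  rewrite rankQ_mx mxrank_eq0; apply/eqP => /matrixP /(_ (enum_rank set0) (enum_rank (Sw KN))).
  rewrite !mxE !enum_rankK cards0 eqxx /= (_ : emono F set0 = eone F _) // wedge_1r.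
  by apply/eqP; exact: (qS (Rr[i]) KN).
split.
  move=> R hR a b ha hb; exact: (pairing b hq (Lam_hom ha)).
split; first exact: part2.
split.
  apply/eqP; rewrite eqn_leq; apply/andP; split.
    apply/leq_sizeP => j hj; rewrite coefE; case: ifP => // _; rewrite r0 //.
  rewrite ltnNge; apply/negP => /leq_sizeP /(_ (N ^ 2 - K.*2.+1)%N (leqnn _)).
  rewrite coefE leq_subr.
  have := part2 0%N (leq0n _); rewrite subn0 => <- /(congr1 absz) /= e.
  by move: rq0; rewrite e.
move=> R hR; rewrite !coefE (_ : (R <= N ^ 2)%N); last by lia.
rewrite (_ : (N ^ 2 - K.*2.+1 - R <= N ^ 2)%N); last by lia.
by rewrite part2.
Qed.
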